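(* Let $m,n\ge 2$ be integers with $n/m$ a positive integer, and suppose there exists a generalized quadrangle $\mathcal{G}$ of order $(m,n)$ which contains a subquadrangle $\mathcal{G}'$ of order $(m,n/m)$. Then there exists an $(m,n+1;8)$-bipartite biregular graph of order $(m+n+1)\frac{m^2-1}{m}n$.
   Context: A generalized quadrangle is a finite point-line incidence geometry whose incidence (Levi) graph — the bipartite graph on points and lines with a point adjacent to a line iff incident — is connected, of diameter 4 and girth 8. It has order $(s,t)$ if each line has exactly $s+1$ points and each point lies on exactly $t+1$ lines. A subquadrangle of $\mathcal{G}$ is a generalized quadrangle whose points and lines are subsets of those of $\mathcal{G}$ with the inherited incidence. For integers $a,b\geq 2$ and even $g\ge4$, an $(a,b;g)$-bipartite biregular graph is a finite simple bipartite graph of girth exactly $g$ in which all vertices of one bipartition class have degree $a$ and all vertices of the other class have degree $b$. *)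

(* Defs.v *)
From mathcomp Require Import all_boot.
Set Implicit Arguments. Unset Strict Implicit. Unset Printing Implicit Defensive.

Section Graph.
Variable V : finType.
Variable e : rel V.

Definition conn_le (D : {set V}) (x y : V) (k : nat) : Prop :=
  exists s : seq V, [/\ size s <= k, path e x s, last x s = y
                       & all (fun v => v \in D) (x :: s)].

Definition connected_on (D : {set V}) : Prop :=
  forall x y, x \in D -> y \in D -> exists k, conn_le D x y k.

Definition diameter_eq (D : {set V}) (d : nat) : Prop :=
  (forall x y, x \in D -> y \in D -> conn_le D x y d) /\
  (exists x y, [/\ x \in D, y \in D & ~ conn_le D x y d.-1]).

Definition is_cycle_in (D : {set V}) (c : seq V) : Prop :=
  [/\ 3 <= size c, uniq c, cycle e c & all (fun v => v \in D) c].

Definition girth_eq (D : {set V}) (g : nat) : Prop :=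
  (exists c, is_cycle_in D c /\ size c = g) /\
  (forall c, is_cycle_in D c -> g <= size c).

Definition simple_graph : Prop := symmetric e /\ irreflexive e.

Definition deg (x : V) : nat := #|[set y | e x y]|.
End Graph.

Definition bipartite_biregular (V : finType) (e : rel V) (A : {set V})
    (a b g : nat) : Prop :=
  [/\ simple_graph e,
      (forall x y, e x y -> (x \in A) != (y \in A)),
      (forall x, x \in A -> deg e x = a),
      (forall x, x \notin A -> deg e x = b)
    & girth_eq e [set: V] g].

Section Geometry.
Variables (P L : finType) (I : P -> L -> bool).

Definition levi : rel (P + L) := fun u v =>
  match u, v with
  | inl p, inr l => I p l
  | inr l, inl p => I p l
  | _, _ => false
  end.

Definition levi_verts (SP : {set P}) (SL : {set L}) : {set P + L} :=
  (inl @: SP) :|: (inr @: SL).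

Definition gq_on (SP : {set P}) (SL : {set L}) : Prop :=
  let D := levi_verts SP SL in
  [/\ connected_on levi D, diameter_eq levi D 4 & girth_eq levi D 8].

Definition gq_order_on (SP : {set P}) (SL : {set L}) (s t : nat) : Prop :=
  [/\ gq_on SP SL,
      (forall l, l \in SL -> #|[set p in SP | I p l]| = s.+1)
    & (forall p, p \in SP -> #|[set l in SL | I p l]| = t.+1)].

Definition gq_order (s t : nat) : Prop := gq_order_on [set: P] [set: L] s t.
End Geometry.

(* Main.v *)
Require Import Defs.
From mathcomp Require Import all_boot zify.
Set Implicit Arguments. Unset Strict Implicit. Unset Printing Implicit Defensive.

Lemma inl_lv (P L : finType) (SP : {set P}) (SL : {set L}) p :
  (inl p \in levi_verts SP SL) = (p \in SP).
Proof.
rewrite /levi_verts inE; apply/orP/idP.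
- by move=> [/imsetP [x Hx [->]] | /imsetP [x Hx //]].
- by move=> H; left; apply/imsetP; exists p.
Qed.

Lemma inr_lv (P L : finType) (SP : {set P}) (SL : {set L}) l :
  (inr l \in levi_verts SP SL) = (l \in SL).
Proof.
rewrite /levi_verts inE; apply/orP/idP.
- by move=> [/imsetP [x Hx //] | /imsetP [x Hx [->]]].
- by move=> H; right; apply/imsetP; exists l.
Qed.

Lemma F1 (P L : finType) (I : P -> L -> bool) (SP : {set P}) (SL : {set L}) :
  gq_on I SP SL -> forall r l, r \in SP -> l \in SL -> ~~ I r l ->
  exists q l2, [/\ q \in SP, l2 \in SL, I q l, I r l2 & I q l2].
Proof.
case=> _ [Hd _] _ r l Hr Hl Hn.
have := Hd (inl r) (inr l); rewrite inl_lv inr_lv => /(_ Hr Hl) [s [Hs Hp Hlast Hall]].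
move: s Hs Hp Hlast Hall => [|a [|b [|c [|d [|e s]]]]] //=.
- by move=> _ H E; subst; rewrite /= andbT (negbTE Hn) in H.
- by move=> _ H E; subst; case: a H => a; rewrite /levi /= ?andbF.
- move=> _ H E; subst; case: a H => a; case: b => b; rewrite /levi /= ?andbF //.
  move=> /and4P[H1 H2 H3 _]; rewrite !inl_lv !inr_lv => /and4P[_ h1 h2 _].
  by exists b, a.
- by move=> _ H E; subst; case: a H => a //; case: b => b //; case: c => c; rewrite /levi /= ?andbF.
Qed.

Lemma inl_eq (P L : eqType) (a b : P) : (inl a == inl b :> P + L) = (a == b).
Proof. by apply/eqP/eqP => [[]|->]. Qed.
Lemma inr_eq (P L : eqType) (a b : L) : (inr a == inr b :> P + L) = (a == b).
Proof. by apply/eqP/eqP => [[]|->]. Qed.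
Lemma inlr_eq (P L : eqType) (a : P) (b : L) : (inl a == inr b :> P + L) = false.
Proof. by []. Qed.
Lemma inrl_eq (P L : eqType) (a : P) (b : L) : (inr b == inl a :> P + L) = false.
Proof. by []. Qed.

Lemma nodigon (P L : finType) (I : P -> L -> bool) (SP : {set P}) (SL : {set L}) :
  gq_on I SP SL -> forall a b L1 L2, a \in SP -> b \in SP -> L1 \in SL -> L2 \in SL ->
  a != b -> L1 != L2 -> I a L1 -> I b L1 -> I a L2 -> I b L2 -> False.
Proof.
case=> _ _ [_ Hg] a b L1 L2 ha hb h1 h2 nab n12 i1 i2 i3 i4.
have : 8 <= 4.
  apply: (Hg [:: inl a; inr L1; inl b; inr L2]); split => //.
  - by rewrite /= !inE /= !inl_eq !inr_eq ?inlr_eq ?inrl_eq ?orbF nab n12.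
  - by rewrite /= /levi i1 i2 i3 i4.
  - by rewrite /= !inl_lv !inr_lv ha hb h1 h2.
by [].
Qed.

Lemma notri (P L : finType) (I : P -> L -> bool) (SP : {set P}) (SL : {set L}) :
  gq_on I SP SL -> forall a b c L1 L2 L3, a \in SP -> b \in SP -> c \in SP ->
  L1 \in SL -> L2 \in SL -> L3 \in SL ->
  a != b -> b != c -> a != c -> L1 != L2 -> L2 != L3 -> L1 != L3 ->
  I a L1 -> I b L1 -> I b L2 -> I c L2 -> I c L3 -> I a L3 -> False.
Proof.
case=> _ _ [_ Hg] a b c L1 L2 L3 ha hb hc h1 h2 h3 nab nbc nac n12 n23 n13 i1 i2 i3 i4 i5 i6.
have : 8 <= 6.
  apply: (Hg [:: inl a; inr L1; inl b; inr L2; inl c; inr L3]); split => //.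
  - rewrite /= !inE /= !negb_or /=.
    by rewrite !inl_eq !inr_eq ?inlr_eq ?inrl_eq ?orbF ?orFb nab nac nbc n12 n13 n23.
  - by rewrite /= /levi i1 i2 i3 i4 i5 i6.
  - by rewrite /= !inl_lv !inr_lv ha hb hc h1 h2 h3.
by [].
Qed.

Lemma dcount (X Y : finType) (R : X -> Y -> bool) (A : {set X}) (B : {set Y}) :
  \sum_(x in A) #|[set y in B | R x y]| = \sum_(y in B) #|[set x in A | R x y]|.
Proof.
have E1 : forall x, #|[set y in B | R x y]| = \sum_(y in B) (R x y : nat).
  move=> x; rewrite -sum1_card big_mkcond [RHS]big_mkcond /=.
  by apply: eq_bigr => y _; rewrite inE; case: (y \in B); case: (R x y).
have E2 : forall y, #|[set x in A | R x y]| = \sum_(x in A) (R x y : nat).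
  move=> y; rewrite -sum1_card big_mkcond [RHS]big_mkcond /=.
  by apply: eq_bigr => x _; rewrite inE; case: (x \in A); case: (R x y).
under eq_bigr do rewrite E1.
under [RHS]eq_bigr do rewrite E2.
exact: exchange_big.
Qed.

Lemma card1_of (T : finType) (S : {set T}) x :
  x \in S -> (forall y, y \in S -> y = x) -> #|S| = 1.
Proof.
move=> Hx Hu; have -> : S = [set x] by apply/setP => y; rewrite inE; apply/idP/eqP => [/Hu|->].
exact: cards1.
Qed.

Lemma card_le1 (T : finType) (S : {set T}) :
  (forall x y, x \in S -> y \in S -> x = y) -> #|S| <= 1.
Proof.
move=> Hu; case: (set_0Vmem S) => [->|[x Hx]]; first by rewrite cards0.
by rewrite (card1_of Hx) // => y Hy; apply: Hu.
Qed.

Lemma two_elems (T : finType) (S : {set T}) :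
  1 < #|S| -> exists x y, [/\ x \in S, y \in S & x != y].
Proof.
move=> H; have /card_gt0P [x Hx] : 0 < #|S| by lia.
have : 0 < #|S :\ x| by move: H; rewrite (cardsD1 x S) Hx; lia.
move=> /card_gt0P [y]; rewrite !inE => /andP[Hyx Hy].
by exists x, y; rewrite eq_sym.
Qed.

Lemma two_elems_avoid (T : finType) (S : {set T}) z :
  2 < #|S| -> exists x y, [/\ x \in S, y \in S, x != y, x != z & y != z].
Proof.
move=> H; have : 1 < #|S :\ z|.
  by move: H; rewrite (cardsD1 z S); case: (z \in S) => /=; lia.
move=> /two_elems [x [y [Hx Hy Hxy]]]; move: Hx Hy; rewrite !inE => /andP[? ?] /andP[? ?].
by exists x, y.
Qed.

Lemma exists_not_in (T : finType) (A B : {set T}) :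
  #|A| < #|B| -> exists2 x, x \in B & x \notin A.
Proof.
move=> H; have : ~~ (B \subset A).
  by apply/negP => /subset_leq_card; lia.
by case/subsetPn => x; exists x.
Qed.

Lemma sum_const_in (T : finType) (A : {set T}) (F : T -> nat) c :
  (forall x, x \in A -> F x = c) -> \sum_(x in A) F x = #|A| * c.
Proof. by move=> H; rewrite (eq_bigr (fun _ => c)) // sum_nat_const. Qed.

Lemma card_M (P L : finType) (I : P -> L -> bool) (SP : {set P}) (SL : {set L}) s t g :
  gq_order_on I SP SL s t -> g \in SL ->
  #|[set h in SL | (h != g) && [exists q in SP, I q g && I q h]]| = s.+1 * t.
Proof.
case=> Hg Hl Hp Hgin.
set M := [set h in SL | _]; set Pg := [set q in SP | I q g].
have := dcount I Pg M.
rewrite (@sum_const_in _ Pg _ t); last first.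
  move=> x; rewrite inE => /andP[xS xg].
  have -> : [set y in M | I x y] = [set l in SL | I x l] :\ g.
    apply/setP => h; rewrite !inE; apply/idP/idP.
    - by case/andP => /and3P[-> -> _] ->.
    - case/and3P => hg hS xh; rewrite hS hg xh /=.
      by rewrite andbT; apply/existsP; exists x; rewrite xS xg xh.
  have := Hp x xS; rewrite (cardsD1 g [set l in SL | I x l]) !inE Hgin xg /=; lia.
rewrite (@sum_const_in _ M _ 1); last first.
  move=> h; rewrite inE => /and3P[hS hg /existsP [q /and3P[qS qg qh]]].
  apply: (@card1_of _ _ q); first by rewrite !inE qS qg qh.
  move=> q'; rewrite !inE => /andP[/andP[q'S q'g] q'h].
  apply/eqP; apply/negP => /negP nq.
  by apply: (nodigon Hg q'S qS Hgin hS nq _ q'g qg q'h qh); rewrite eq_sym.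
by rewrite muln1 => <-; rewrite Hl.
Qed.

Lemma gq_line_ex (P L : finType) (I : P -> L -> bool) (SP : {set P}) (SL : {set L}) s t :
  gq_order_on I SP SL s t -> exists g, g \in SL.
Proof.
case=> [[_ [_ [x [y [hx _ _]]]] _] _ Hp].
case: x hx => [p|l]; rewrite ?inl_lv ?inr_lv => h; last by exists l.
have /card_gt0P [l] : 0 < #|[set l in SL | I p l]| by rewrite Hp.
by rewrite inE => /andP[? _]; exists l.
Qed.

Lemma card_SP (P L : finType) (I : P -> L -> bool) (SP : {set P}) (SL : {set L}) s t :
  gq_order_on I SP SL s t -> #|SP| = s.+1 * (s * t).+1.
Proof.
move=> H; have [g Hgin] := gq_line_ex H; have HM := card_M H Hgin.
move: H => [Hg Hl Hp].
move: HM; set M := [set h in SL | _] => HM; set Pg := [set q in SP | I q g].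
have E1 : #|SP :\: Pg| = #|M| * s.
  have := dcount I (SP :\: Pg) M.
  rewrite (@sum_const_in _ _ _ 1); last first.
    move=> r; rewrite !inE => /andP[rg rS]; rewrite rS /= in rg.
    have [q [l2 [qS l2S qg rl2 ql2]]] := F1 Hg rS Hgin rg.
    have l2g : l2 != g by apply/eqP => E; subst l2; rewrite rl2 in rg.
    apply: (@card1_of _ _ l2).
      rewrite !inE l2S l2g rl2 /= andbT; apply/existsP; exists q; by rewrite qS qg ql2.
    move=> h; rewrite !inE => /andP[/and3P[hS hg /existsP [q' /and3P[q'S q'g q'h]]] rh].
    apply/eqP; apply/negP => /negP nh.
    have rq : r != q by apply/eqP => E; subst r; rewrite qg in rg.
    have rq' : r != q' by apply/eqP => E; subst r; rewrite q'g in rg.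
    case: (eqVneq q q') => [E|qq'].
      subst q'; exact: (nodigon Hg rS qS hS l2S rq nh rh q'h rl2 ql2).
    have gh : g != h by rewrite eq_sym.
    have l2h : l2 != h by rewrite eq_sym.
    exact: (notri Hg rS qS q'S l2S Hgin hS rq qq' rq' l2g gh l2h rl2 ql2 qg q'g q'h rh).
  rewrite (@sum_const_in _ _ _ s); last first.
    move=> h; rewrite inE => /and3P[hS hg /existsP [q /and3P[qS qg qh]]].
    have -> : [set x in SP :\: Pg | I x h] = [set x in SP | I x h] :\ q.
      apply/setP => x; rewrite !inE; apply/idP/idP.
      - case/andP => /andP[xg xS] xh; rewrite xS xh !andbT.
        by apply/eqP => E; subst x; rewrite xS qg in xg.
      - case/and3P => xq xS xh; rewrite xS xh /= !andbT.
        apply/negP => xg.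
        have gh : g != h by rewrite eq_sym.
        exact: (nodigon Hg xS qS Hgin hS xq gh xg qg xh qh).
    have := Hl h hS; rewrite (cardsD1 q [set x in SP | I x h]) !inE qS qh /=; lia.
  by rewrite muln1 => ->.
have E2 : #|SP :&: Pg| = s.+1.
  rewrite (setIidPr _) ?Hl //; apply/subsetP => x; rewrite inE; by case/andP.
have := cardsID Pg SP; rewrite E1 E2 HM; nia.
Qed.

Lemma card_SL (P L : finType) (I : P -> L -> bool) (SP : {set P}) (SL : {set L}) s t :
  gq_order_on I SP SL s t -> #|SL| = t.+1 * (s * t).+1.
Proof.
move=> H; have HP := card_SP H; move: H => [_ Hl Hp].
have := dcount I SP SL.
rewrite (sum_const_in Hp) (sum_const_in Hl) HP => E.
apply/eqP; rewrite -(eqn_pmul2r (ltn0Sn s)) -E; apply/eqP; nia.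
Qed.

Lemma card_val (T : finType) (ext : pred T) (Q : pred T) :
  #|[set y : {x | ext x} | Q (val y)]| = #|[set u | ext u && Q u]|.
Proof.
rewrite -(card_imset _ val_inj); apply: eq_card => u; rewrite !inE.
apply/imsetP/idP.
- by case=> y; rewrite inE => Hy ->; rewrite Hy (valP y).
- case/andP => h1 h2; exists (exist _ u h1) => //; by rewrite inE.
Qed.

Lemma card_inr (P L : finType) (Q : pred L) :
  #|[set u : P + L | if u is inr l then Q l else false]| = #|[set l | Q l]|.
Proof.
have inj : injective (@inr P L) by move=> a b [].
rewrite -(card_imset _ inj); apply: eq_card => u; rewrite !inE.
apply/idP/imsetP.
- by case: u => // l Hl; exists l; rewrite ?inE.
- by case=> l; rewrite inE => Hl ->.
Qed.

Lemma card_inl (P L : finType) (Q : pred P) :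
  #|[set u : P + L | if u is inl p then Q p else false]| = #|[set p | Q p]|.
Proof.
have inj : injective (@inl P L) by move=> a b [].
rewrite -(card_imset _ inj); apply: eq_card => u; rewrite !inE.
apply/idP/imsetP.
- by case: u => // l Hl; exists l; rewrite ?inE.
- by case=> l; rewrite inE => Hl ->.
Qed.

Lemma arith (m k a b : nat) : 1 < m ->
  a + m.+1 * (m * k).+1 = m.+1 * (m * (k * m)).+1 ->
  b + k.+1 * (m * k).+1 = (k * m).+1 * (m * (k * m)).+1 ->
  b + a = (m + k * m + 1) * (m ^ 2 - 1) * k.
Proof.
move=> hm E1 E2.
have [j Ej] : exists j, m = j.+2 by exists (m - 2); lia.
subst m.
have -> : j.+2 ^ 2 - 1 = j * j + 4 * j + 3 by rewrite expnS expn1; lia.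
have -> : a = (j+3)*(j+2)*k*(j+1) by lia.
have -> : b = (k*(j+2)+1)*k*(j*j+4*j+3) by lia.
lia.
Qed.

Unset Implicit Arguments.

Theorem mainTheorem6 (m n : nat) (hm : 2 <= m) (hn : 2 <= n) (hdiv : m %| n)
  (P L : finType) (I : P -> L -> bool) :
  gq_order I m n ->
  (exists (SP : {set P}) (SL : {set L}), gq_order_on I SP SL m (n %/ m)) ->
  exists (V : finType) (e : rel V) (A : {set V}),
    bipartite_biregular e A m n.+1 8 /\
    #|V| = (m + n + 1) * (m ^ 2 - 1) * (n %/ m).
Proof.
move=> HS [SP [SL]]; move Ek : (n %/ m) => k HS'.
have En : n = k * m by rewrite -Ek divnK.
subst n.
have cP := card_SP HS; have cL := card_SL HS.
have cP' := card_SP HS'; have cL' := card_SL HS'.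
case: (HS) => Hg HlS HpS; case: (HS') => Hg' Hl' Hp'.
have Hk : 0 < k by move: hn; case: (k) => //.
have G1 : forall l p, l \in SL -> I p l -> p \in SP.
  move=> l p hl hp.
  have E : [set p in SP | I p l] = [set p in setT | I p l].
    apply/eqP; rewrite eqEcard Hl' // HlS ?in_setT // leqnn andbT.
    by apply/subsetP => x; rewrite !inE => /andP[_ ->].
  have : p \in [set p in setT | I p l] by rewrite inE in_setT hp.
  by rewrite -E inE => /andP[].
have T1 := @in_setT P; have T2 := @in_setT L.
have G2 : forall l p p', l \notin SL -> p \in SP -> p' \in SP -> I p l -> I p' l -> p = p'.
  move=> l p p' hl hp hp' ipl ip'l; apply/eqP; apply/negP => /negP npp.
  have /card_gt0P [l2] : 0 < #|[set l in SL | I p l]| by rewrite Hp'.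
  rewrite inE => /andP[l2S ipl2].
  have ll2 : l != l2 by apply/eqP => E; subst l2; rewrite l2S in hl.
  case: (boolP (I p' l2)) => h.
    exact: (nodigon Hg (T1 p) (T1 p') (T2 l) (T2 l2) npp ll2 ipl ip'l ipl2 h).
  have [q [l3 [qS l3S ql2 p'l3 ql3]]] := F1 Hg' hp' l2S h.
  have l3l : l3 != l by apply/eqP => E; subst l3; rewrite l3S in hl.
  have ll3 : l != l3 by rewrite eq_sym.
  case: (eqVneq l2 l3) => [E|l23]; first by subst l3; rewrite p'l3 in h.
  case: (eqVneq q p) => [E|qp]; first by subst q; exact: (nodigon Hg (T1 p) (T1 p') (T2 l) (T2 l3) npp ll3 ipl ip'l ql3 p'l3).
  case: (eqVneq q p') => [E|qp']; first by subst q; rewrite ql2 in h.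
  have pq : p != q by rewrite eq_sym.
  have l2l : l2 != l by rewrite eq_sym.
  exact: (notri Hg (T1 p) (T1 q) (T1 p') (T2 l2) (T2 l3) (T2 l) pq qp' npp l23 l3l l2l ipl2 ql2 ql3 p'l3 ip'l ipl).
have G3 : forall l, l \notin SL -> exists2 p, p \in SP & I p l.
  move=> l hl; case: (boolP [exists p in SP, I p l]) => [/existsP [p /andP[]]|/existsPn Hno].
    by move=> *; exists p.
  exfalso.
  have HM := card_M HS (T2 l).
  move: HM; set H := [set h in setT | _] => HM.
  have := dcount I SP H.
  have L1 : #|SP| <= \sum_(x in SP) #|[set h in H | I x h]|.
    rewrite -sum1_card; apply: leq_sum => x xS.
    have nxl : ~~ I x l by have := Hno x; rewrite xS.
    have [q [l2 [_ _ ql xl2 ql2]]] := F1 Hg (T1 x) (T2 l) nxl.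
    apply/card_gt0P; exists l2; rewrite !inE xl2 andbT /=.
    apply/andP; split; first by apply/eqP => E; subst l2; rewrite xl2 in nxl.
    by apply/existsP; exists q; rewrite ?inE ql ql2.
  have L2 : \sum_(y in H) #|[set x in SP | I x y]| <= #|H|.
    rewrite -sum1_card; apply: leq_sum => h; rewrite inE => /andP[_ /andP[_ /existsP [q /and3P[_ ql qh]]]].
    have qS : q \notin SP by have := Hno q; rewrite ql andbT.
    have hS : h \notin SL by apply/negP => hS; rewrite (G1 h q hS qh) in qS.
    apply: card_le1 => x y; rewrite !inE => /andP[xS xh] /andP[yS yh].
    exact: (G2 h x y hS xS yS xh yh).
  move=> E; move: L1 L2; rewrite E HM cP'; nia.
have DL : forall l, l \notin SL -> #|[set p | (p \notin SP) && I p l]| = m.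
  move=> l hl; have [z zS zl] := G3 l hl.
  have := cardsID SP [set p | I p l].
  have -> : #|[set p | I p l] :&: SP| = 1.
    apply: (@card1_of _ _ z); first by rewrite !inE zS zl.
    by move=> y; rewrite !inE => /andP[yl yS]; apply: (G2 l y z hl yS zS yl zl).
  have -> : [set p | I p l] :\: SP = [set p | (p \notin SP) && I p l].
    by apply/setP => p; rewrite !inE andbC.
  have : #|[set p | I p l]| = m.+1.
    by rewrite -(HlS l (T2 l)); apply: eq_card => p; rewrite !inE.
  lia.
have DP : forall p, p \notin SP -> #|[set l | (l \notin SL) && I p l]| = (k * m).+1.
  move=> p hp; rewrite -(HpS p (T1 p)); apply: eq_card => l; rewrite !inE.
  apply/andP/idP => [[_ ->]//|h]; split=> //.
  by apply/negP => hl; rewrite (G1 l p hl h) in hp.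
pose ext : pred (P + L) := fun u => match u with inl p => p \notin SP | inr l => l \notin SL end.
exists {u : P + L | ext u}.
exists (fun x y : {u | ext u} => levi I (val x) (val y)).
exists [set x : {u | ext u} | if val x is inr _ then true else false].
split; last first.
  rewrite card_sig.
  have := cardsID [set u : P + L | if u is inl _ then true else false] [set u | ext u].
  have -> : #|[set u | ext u] :&: [set u : P + L | if u is inl _ then true else false]|
          = #|[set p | p \notin SP]|.
    rewrite -(card_inl L); apply: eq_card => u; rewrite !inE; by case: u => * /=; rewrite ?andbT ?andbF.
  have -> : #|[set u | ext u] :\: [set u : P + L | if u is inl _ then true else false]|
          = #|[set l | l \notin SL]|.
    rewrite -(card_inr P); apply: eq_card => u; rewrite !inE; by case: u.
  have -> : #|[pred x | ext x]| = #|[set u | ext u]| by apply: eq_card => u; rewrite !inE.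
  move=> <-.
  have E1 : #|[set p | p \notin SP]| + #|SP| = #|[set: P]|.
    by rewrite cardsT -(cardsC SP) addnC; congr (_ + _); apply: eq_card => p; rewrite !inE.
  have E2 : #|[set l | l \notin SL]| + #|SL| = #|[set: L]|.
    by rewrite cardsT -(cardsC SL) addnC; congr (_ + _); apply: eq_card => p; rewrite !inE.
  move: E1 E2; rewrite cP cL cP' cL'.
  move=> E1 E2; rewrite addnC; exact: arith hm E1 E2.
case: (Hg) => _ _ [_ Hgi].
split.
- split.
  + by move=> [[p|l] hx] [[q|l'] hy]; rewrite /levi.
  + by move=> [[p|l] hx]; rewrite /levi.
- by move=> [[p|l] hx] [[q|l'] hy]; rewrite !inE /levi.
- move=> [[p|l] hx]; rewrite inE //= => _.
  rewrite /deg card_val -(DL l hx) -(card_inl L (fun p => (p \notin SP) && I p l)).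
  by apply: eq_card => u; rewrite !inE; case: u => * /=; rewrite /levi ?andbF.
- move=> [[p|l] hx]; rewrite inE //= => _.
  rewrite /deg card_val -(DP p hx) -(card_inr P (fun l => (l \notin SL) && I p l)).
  by apply: eq_card => u; rewrite !inE; case: u => * /=; rewrite /levi ?andbF.
split; last first.
  move=> c [hs hu hc ha].
  have := Hgi (map val c); rewrite size_map; apply; split.
  - by rewrite size_map.
  - by rewrite (map_inj_uniq val_inj).
  - by rewrite cycle_map.
  - by apply/allP => u _; case: u => [p|l]; rewrite ?inl_lv ?inr_lv.
have [g gS] := gq_line_ex HS'.
have [z [z' [zg z'g zz']]] : exists z z', [/\ z \in [set p in SP | I p g], z' \in [set p in SP | I p g] & z != z'].
  by apply: two_elems; rewrite Hl' //; lia.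
move: zg z'g; rewrite !inE => /andP[zS zg] /andP[z'S z'g].
have extline : forall z, z \in SP -> exists2 l, l \notin SL & I z l.
  move=> w wS.
  have Hlt : #|[set l in SL | I w l]| < #|[set l in setT | I w l]|.
    by rewrite Hp' // HpS //; nia.
  have [l] := exists_not_in Hlt.
  by rewrite !inE /= => wl; rewrite wl andbT => lS; exists l.
have [l lS zl] := extline z zS; have [l' l'S z'l'] := extline z' z'S.
have lg : l != g by apply/eqP => E; subst l; rewrite gS in lS.
have l'g : l' != g by apply/eqP => E; subst l'; rewrite gS in l'S.
have gl' : g != l' by rewrite eq_sym.
have gl : g != l by rewrite eq_sym.
have ll' : l != l'.
  apply/eqP => E; subst l'.
  exact: (nodigon Hg (T1 z) (T1 z') (T2 g) (T2 l) zz' gl zg z'g zl z'l').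
have disj : forall w, I w l -> I w l' -> False.
  move=> w wl wl'.
  case: (eqVneq w z) => [E|wz].
    by subst w; exact: (nodigon Hg (T1 z) (T1 z') (T2 g) (T2 l') zz' gl' zg z'g wl' z'l').
  case: (eqVneq w z') => [E|wz'].
    by subst w; exact: (nodigon Hg (T1 z) (T1 z') (T2 g) (T2 l) zz' gl zg z'g zl wl).
  have zw : z != w by rewrite eq_sym.
  exact: (notri Hg (T1 z) (T1 w) (T1 z') (T2 l) (T2 l') (T2 g) zw wz' zz' ll' l'g lg zl wl wl' z'l' z'g zg).
have Hc0 : #|[set p | I p l]| = m.+1.
  by rewrite -(HlS l (T2 l)); apply: eq_card => p; rewrite !inE.
have Hc : 2 < #|[set p | I p l]| by rewrite Hc0 ltnS.
have [x1 [x2 [hx1 hx2 x12 x1z x2z]]] := two_elems_avoid z Hc.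
move: hx1 hx2; rewrite !inE => x1l x2l.
have extx : forall x, I x l -> x != z -> x \notin SP.
  by move=> x xl xz; apply/negP => xS; rewrite (G2 l x z lS xS zS xl zl) eqxx in xz.
have proj : forall x, I x l -> x != z -> exists y h,
   [/\ I y l', I x h, I y h, y \notin SP & [/\ h \notin SL, h != l & h != l']].
  move=> x xl xz; have xS := extx x xl xz.
  have nxl' : ~~ I x l' by apply/negP => xl'; exact: (disj x xl xl').
  have [y [h [_ _ yl' xh yh]]] := F1 Hg (T1 x) (T2 l') nxl'.
  have hl : h != l by apply/eqP => E; subst h; exact: (disj y yh yl').
  have hl' : h != l' by apply/eqP => E; subst h; rewrite xh in nxl'.
  have hS : h \notin SL by apply/negP => hS; rewrite (G1 h x hS xh) in xS.
  exists y, h; split => //.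
  apply/negP => yS; have E := G2 l' y z' l'S yS z'S yl' z'l'; subst y.
  have hg : h != g by apply/eqP => E; subst h; rewrite (G1 g x gS xh) in xS.
  have zx : z != x by rewrite eq_sym.
  have xz' : x != z' by apply/eqP => E; subst x; rewrite z'S in xS.
  have lh : l != h by rewrite eq_sym.
  exact: (notri Hg (T1 z) (T1 x) (T1 z') (T2 l) (T2 h) (T2 g) zx xz' zz' lh hg lg zl xl xh yh z'g zg).
have [y1 [h1 [y1l' x1h1 y1h1 y1S [h1S h1l h1l']]]] := proj x1 x1l x1z.
have [y2 [h2 [y2l' x2h2 y2h2 y2S [h2S h2l h2l']]]] := proj x2 x2l x2z.
have x1S := extx x1 x1l x1z; have x2S := extx x2 x2l x2z.
have h12 : h2 != h1.
  apply/eqP => E; subst h2; have lh1 : l != h1 by rewrite eq_sym.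
  exact: (nodigon Hg (T1 x1) (T1 x2) (T2 l) (T2 h1) x12 lh1 x1l x2l x1h1 x2h2).
have nxy : forall x y, I x l -> I y l' -> x != y.
  by move=> x y xl yl'; apply/eqP => E; subst y; exact: (disj x xl yl').
have y21 : y2 != y1.
  apply/eqP => E; subst y2.
  have lh2 : l != h2 by rewrite eq_sym.
  have lh1 : l != h1 by rewrite eq_sym.
  exact: (notri Hg (T1 x1) (T1 x2) (T1 y1) (T2 l) (T2 h2) (T2 h1) x12 (nxy _ _ x2l y1l') (nxy _ _ x1l y1l') lh2 h12 lh1 x1l x2l x2h2 y2h2 y1h1 x1h1).
have lh2 : l != h2 by rewrite eq_sym.
have lh1 : l != h1 by rewrite eq_sym.
have l'h1 : l' != h1 by rewrite eq_sym.
pose V := {u : P + L | ext u}.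
exists [:: (exist ext (inl x1) x1S : V); exist ext (inr l) lS; exist ext (inl x2) x2S;
  exist ext (inr h2) h2S; exist ext (inl y2) y2S; exist ext (inr l') l'S;
  exist ext (inl y1) y1S; exist ext (inr h1) h1S].
split => //; split => //.
- rewrite -(map_inj_uniq val_inj) /= !inE !inl_eq !inr_eq ?inlr_eq ?inrl_eq /=.
  by rewrite !(negbTE x12) (negbTE (nxy _ _ x1l y2l')) (negbTE (nxy _ _ x1l y1l')) (negbTE (nxy _ _ x2l y2l')) (negbTE (nxy _ _ x2l y1l')) (negbTE y21) (negbTE lh2) (negbTE ll') (negbTE lh1) (negbTE h2l') (negbTE h12) (negbTE l'h1).
- by rewrite /= /levi x1l x2l x2h2 y2h2 y2l' y1l' y1h1 x1h1.
- by apply/allP => ? _; rewrite in_setT.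
Qed.
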